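(* Let $F:\mathbb{R}^d\to\mathbb{R}^d$ be $L$-Lipschitz, $G:\mathbb{R}^d\rightrightarrows\mathbb{R}^d$ maximally monotone, the solution set of $0\in F(x)+G(x)$ nonempty, $F+G$ maximally $\rho$-cohypomonotone with $\rho>0$, and $\eta>\rho$. Let $\alpha=1-\frac\rho\eta$, $\beta_k=\frac1{k+2}$, $x^\star$ a solution, and suppose $(x_k)$ satisfies $x_{k+1}=\beta_kx_0+(1-\beta_k)((1-\alpha)x_k+\alpha\widetilde J_k)$ with $\|J_{\eta(F+G)}(x_k)-\widetilde J_k\|\le\varepsilon_k$ for some $\varepsilon_k>0$. Then for $k\ge0$, $$\|x_{k+1}-x^\star\|\le\|x_0-x^\star\|+\Big(1-\frac\rho\eta\Big)\frac1{k+2}\sum_{i=0}^k(i+1)\varepsilon_i.$$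
   Context: For an operator $A$, $J_A=(\mathrm{Id}+A)^{-1}$. $F+G$ is $\rho$-cohypomonotone if $\langle u-v,x-y\rangle\ge-\rho\|u-v\|^2$ for all $(x,u),(y,v)$ in its graph; maximal means its graph is not strictly contained in that of another $\rho$-cohypomonotone operator. *)

(* Defs.v *)
From mathcomp Require Import all_boot all_order all_algebra.
From mathcomp Require Import reals.
Set Implicit Arguments. Unset Strict Implicit. Unset Printing Implicit Defensive.
Import Order.TTheory GRing.Theory Num.Theory.
Local Open Scope ring_scope.

Section Defs.
Variables (R : realType) (d : nat).
Notation V := 'rV[R]_d.

Definition inner (u v : V) : R := \sum_(i < d) u 0 i * v 0 i.
Definition enorm (u : V) : R := Num.sqrt (inner u u).

(* set-valued operators, represented by their graphs: A x u  <->  u \in A(x) *)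
Definition oper := V -> V -> Prop.

Definition lipschitz (L : R) (F : V -> V) : Prop :=
  forall x y, enorm (F x - F y) <= L * enorm (x - y).

Definition monotone (A : oper) : Prop :=
  forall x u y v, A x u -> A y v -> 0 <= inner (u - v) (x - y).

Definition subgraph (A B : oper) : Prop := forall x u, A x u -> B x u.

Definition maximally_monotone (A : oper) : Prop :=
  monotone A /\ forall B, monotone B -> subgraph A B -> subgraph B A.

Definition cohypomonotone (rho : R) (A : oper) : Prop :=
  forall x u y v, A x u -> A y v ->
    - rho * enorm (u - v) ^+ 2 <= inner (u - v) (x - y).

Definition maximally_cohypomonotone (rho : R) (A : oper) : Prop :=
  cohypomonotone rho A /\
  forall B, cohypomonotone rho B -> subgraph A B -> subgraph B A.

Definition oper_add (F : V -> V) (G : oper) : oper :=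
  fun x w => exists u, G x u /\ w = F x + u.

Definition oper_scale (eta : R) (A : oper) : oper :=
  fun x w => exists u, A x u /\ w = eta *: u.

(* p \in J_A(x) = (Id + A)^{-1}(x)  <->  x \in p + A(p) *)
Definition resolvent (A : oper) (x p : V) : Prop :=
  exists u, A p u /\ x = p + u.

End Defs.

(* Main.v *)
Require Import Defs.
From mathcomp Require Import all_boot all_order all_algebra.
From mathcomp Require Import reals.
From mathcomp Require Import ring lra.
Import Order.TTheory GRing.Theory Num.Theory.
Local Open Scope ring_scope.

Section Aux.
Variables (R : realType) (d : nat).
Notation V := 'rV[R]_d.
Implicit Types u v w : V.

Lemma innerC u v : inner u v = inner v u.
Proof. by apply: eq_bigr => i _; rewrite mulrC. Qed.

Lemma innerDl u v w : inner (u + v) w = inner u w + inner v w.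
Proof. by rewrite /inner -big_split; apply: eq_bigr => i _; rewrite mxE mulrDl. Qed.

Lemma innerZl (a : R) u v : inner (a *: u) v = a * inner u v.
Proof. by rewrite /inner mulr_sumr; apply: eq_bigr => i _; rewrite mxE mulrA. Qed.

Lemma innerNl u v : inner (- u) v = - inner u v.
Proof. by rewrite /inner -sumrN; apply: eq_bigr => i _; rewrite mxE mulNr. Qed.

Lemma innerDr u v w : inner w (u + v) = inner w u + inner w v.
Proof. by rewrite !(innerC w) innerDl. Qed.
Lemma innerZr (a : R) u v : inner v (a *: u) = a * inner v u.
Proof. by rewrite !(innerC v) innerZl. Qed.
Lemma innerNr u v : inner v (- u) = - inner v u.
Proof. by rewrite !(innerC v) innerNl. Qed.

Lemma inner_ge0 u : 0 <= inner u u.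
Proof. by apply: sumr_ge0 => i _; rewrite -expr2 sqr_ge0. Qed.

Lemma inner0 u : inner u u = 0 -> forall v, inner u v = 0.
Proof.
move=> H v; rewrite /inner big1 // => i _.
have H2 : forall j : 'I_d, true -> 0 <= u 0 j * u 0 j by move=> j _; rewrite -expr2 sqr_ge0.
have E := psumr_eq0P H2 H (i:=i) isT.
move/eqP: E; by rewrite -expr2 sqrf_eq0 => /eqP ->; rewrite mul0r.
Qed.

Lemma CS u v : inner u v ^+ 2 <= inner u u * inner v v.
Proof.
set a := inner u u; set b := inner u v; set c := inner v v.
have [c0|cpos] := eqVneq c 0.
  by rewrite /b innerC (@inner0 v c0) c0 expr0n mulr0.
have cge : 0 < c by rewrite lt0r cpos inner_ge0.
have := inner_ge0 (c *: u - b *: v).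
rewrite !(innerDl, innerZl, innerNl, innerDr, innerZr, innerNr).
rewrite -/a -/c (innerC v u) -/b => H.
have : 0 <= c * (a * c - b ^+ 2) by nra.
by rewrite pmulr_rge0 // subr_ge0 mulrC.
Qed.

Lemma enorm_ge0 u : 0 <= enorm u.
Proof. exact: sqrtr_ge0. Qed.

Lemma enorm_sq u : enorm u ^+ 2 = inner u u.
Proof. by rewrite sqr_sqrtr // inner_ge0. Qed.

Lemma enormZ (a : R) u : enorm (a *: u) = `|a| * enorm u.
Proof.
rewrite /enorm innerZl innerC innerZl mulrA -expr2 sqrtrM ?sqr_ge0 //.
by rewrite sqrtr_sqr.
Qed.

Lemma enormD u v : enorm (u + v) <= enorm u + enorm v.
Proof.
rewrite -(ler_pXn2r (n:=2)) //; last 2 first.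
- by rewrite nnegrE enorm_ge0.
- by rewrite nnegrE addr_ge0 // enorm_ge0.
rewrite enorm_sq sqrrD !enorm_sq innerDl !(innerC _ (u + v)) !innerDl (innerC v u).
have : inner u v <= enorm u * enorm v.
  rewrite /enorm -sqrtrM ?inner_ge0 //.
  apply: le_trans (ler_norm _) _.
  by rewrite -sqrtr_sqr ler_sqrt ?CS // mulr_ge0 // inner_ge0.
lra.
Qed.

End Aux.
Arguments innerC {R d}. Arguments innerDl {R d}. Arguments innerDr {R d}. Arguments innerZl {R d}. Arguments innerZr {R d}. Arguments innerNl {R d}. Arguments innerNr {R d}. Arguments inner_ge0 {R d}. Arguments inner0 {R d}. Arguments CS {R d}. Arguments enorm_ge0 {R d}. Arguments enorm_sq {R d}. Arguments enormZ {R d}. Arguments enormD {R d}.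

Lemma nonexp (R : realType) (d : nat) (A : oper R d) (rho eta : R) (xk p u xstar : 'rV[R]_d) :
  cohypomonotone rho A -> 0 < rho -> rho < eta ->
  A p u -> A xstar 0 -> xk = p + eta *: u ->
  enorm ((1 - (1 - rho / eta)) *: xk + (1 - rho / eta) *: p - xstar) <= enorm (xk - xstar).
Proof.
move=> Hc r0 re Hp Hs ->.
have e0 : eta != 0 by apply/eqP => e0; lra.
have -> : (1 - (1 - rho / eta)) *: (p + eta *: u) + (1 - rho / eta) *: p - xstar
   = (p - xstar) + rho *: u.
  apply/rowP => i; rewrite !mxE; field; exact: e0.
have -> : p + eta *: u - xstar = (p - xstar) + eta *: u.
  by apply/rowP => i; rewrite !mxE; ring.
have := Hc _ _ _ _ Hp Hs; rewrite subr0 enorm_sq.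
rewrite /enorm ler_sqrt ?inner_ge0 //.
rewrite !(innerDl, innerZl, innerNl, innerDr, innerZr, innerNr).
idtac.
rewrite (innerC u p) (innerC u xstar) (innerC xstar p). have := inner_ge0 u.
set a := inner u u; set b := inner p u; set c := inner xstar u.
move=> ha H.
have h1 : 0 <= (eta - rho) * (b - c + rho * a) by apply: mulr_ge0; lra.
have h2 : 0 <= (eta - rho) * (eta - rho) * a by apply: mulr_ge0 => //; nra.
nra.
Qed.

Theorem lemmaA2 (R : realType) (d : nat) (F : 'rV[R]_d -> 'rV[R]_d)
  (G : oper R d) (L rho eta : R) (x Jt : nat -> 'rV[R]_d) (eps : nat -> R)
  (xstar : 'rV[R]_d) :
  lipschitz L F ->
  maximally_monotone G ->
  (exists z, oper_add F G z 0) ->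
  maximally_cohypomonotone rho (oper_add F G) ->
  0 < rho -> rho < eta ->
  oper_add F G xstar 0 ->
  (forall k : nat,
     x k.+1 = (k.+2%:R)^-1 *: x 0
              + (1 - (k.+2%:R)^-1) *:
                  ((1 - (1 - rho / eta)) *: x k + (1 - rho / eta) *: Jt k)) ->
  (forall k : nat, 0 < eps k /\
     exists p, resolvent (oper_scale eta (oper_add F G)) (x k) p /\
               enorm (p - Jt k) <= eps k) ->
  forall k : nat,
    enorm (x k.+1 - xstar) <=
      enorm (x 0 - xstar)
      + (1 - rho / eta) * (k.+2%:R)^-1 * \sum_(i < k.+1) (i.+1%:R * eps i).
Proof.
move=> _ _ _ [Hc _] r0 re Hs Hx Heps.
set D := enorm (x 0 - xstar).
set al := 1 - rho / eta.
have e0 : 0 < eta by lra.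
have al0 : 0 <= al.
  rewrite /al subr_ge0 ler_pdivrMr // mul1r; lra.
suff P : forall k, enorm (x k - xstar) <=
   D + al * (k.+1%:R)^-1 * \sum_(i < k) (i.+1%:R * eps i) by move=> k; exact: P.
elim=> [|k IH].
  by rewrite big_ord0 mulr0 addr0.
have [ek [p [[w [[u [Hu ->]] Hxk]] Hpe]]] := Heps k.
have Hn := @nonexp _ _ _ _ _ _ _ _ _ Hc r0 re Hu Hs Hxk.
set bt := (k.+2%:R)^-1 : R.
set S := (1 - (1 - rho / eta)) *: x k + (1 - rho / eta) *: p.
have Eq : x k.+1 - xstar = bt *: (x 0 - xstar) + (1 - bt) *: ((S - xstar) + al *: (Jt k - p)).
  rewrite Hx; apply/rowP => i; rewrite !mxE /al /S /bt ?mxE; move: (k.+2%:R^-1) (rho / eta) => t r; ring.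
have bt0 : 0 < bt by rewrite /bt invr_gt0 ltr0n.
have bt1 : bt <= 1 by rewrite /bt invf_le1 ?ltr0n // ler1n.
have H1 : enorm (x k.+1 - xstar) <= bt * D + (1 - bt) * (enorm (S - xstar) + al * eps k).
  rewrite Eq; apply: le_trans (enormD _ _) _.
  rewrite !enormZ (ger0_norm (ltW bt0)) (ger0_norm (_ : 0 <= 1 - bt)); last lra.
  apply: lerD => //; apply: ler_wpM2l; first lra.
  apply: le_trans (enormD _ _) _; apply: lerD => //.
  rewrite enormZ ger0_norm // ler_wpM2l //.
  by rewrite -opprB /enorm innerNl innerNr opprK.
apply: le_trans H1 _.
rewrite big_ord_recr /=.
set s := \sum_(i < k) _.
have Hs2 : enorm (S - xstar) <= D + al * (k.+1%:R)^-1 * s by apply: le_trans Hn IH.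
have : bt * D + (1 - bt) * (enorm (S - xstar) + al * eps k) <=
       bt * D + (1 - bt) * (D + al * (k.+1%:R)^-1 * s + al * eps k).
  apply: lerD => //; apply: ler_wpM2l; first lra. by rewrite lerD2r.
move/le_trans; apply.
rewrite le_eqVlt; apply/orP; left; apply/eqP.
rewrite /bt (_ : (k.+2%:R : R) = k.+1%:R + 1); last by rewrite natr1.
have k0 : (k.+1%:R : R) != 0 by rewrite pnatr_eq0.
have k1 : (k.+1%:R + 1 : R) != 0 by rewrite natr1 pnatr_eq0.
move: (k.+1%:R : R) k0 k1 => n k0 k1.
by field; rewrite k0 k1.
Qed.
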